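(* Let $M\ge0$. There is no infinite antichain $S_1,S_2,\dots$ in $(\mathrm{RL},\le_{RL})$, with $S_i$ of type $(d_i,n_i)$, for which the sequence $(n_i)_i$ is bounded.
   Context: Fix an integer $M\ge0$. A reading list of type $(d,n)$ is a tuple $S=(S^1,\dots,S^n)$ of $d$-element subsets of $[Md]=\{1,\dots,Md\}$ (each $S^i$ viewed as an increasing word). $\mathrm{RL}$ denotes the set of all reading lists of all types. For $S=(S^1,\dots,S^n)$ of type $(d,n)$ and $T=(T^1,\dots,T^m)$ of type $(e,m)$, define $S\le_{RL}T$ iff there exist indices $1\le k_1<k_2<\cdots<k_n\le m$ and maps $f_i:S^i\to T^{k_i}$ ($i=1,\dots,n$), each strictly increasing, such that $f_i(x)=f_j(x)$ for all $i,j$ and all $x\in S^i\cap S^j$. An antichain is a sequence of pairwise incomparable elements. *)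

(* Defs.v *)
From mathcomp Require Import all_boot.
Set Implicit Arguments. Unset Strict Implicit. Unset Printing Implicit Defensive.

(* A reading list of type (d, n): the parameter d together with the list
   S = (S^1, ..., S^n) of its words; each S^i is a d-element subset of
   [M d] = {1, ..., M d}, represented as its increasing word (a strictly
   increasing list of naturals). *)
Record readingList := RL { rl_d : nat; rl_sets : seq (seq nat) }.

Definition rl_n (S : readingList) : nat := size (rl_sets S).

Definition is_subset_word (M d : nat) (s : seq nat) : bool :=
  [&& sorted ltn s, size s == d & all (fun x => (0 < x) && (x <= M * d)) s].

Definition valid_RL (M : nat) (S : readingList) : bool :=
  all (is_subset_word M (rl_d S)) (rl_sets S).

(* S <=_RL T.  Indices are 0-based: k_0 < ... < k_{n-1} < m.
   The maps f_i : S^i -> T^{k_i} are given as f i : nat -> nat, only their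
   values on S^i matter. *)
Definition rl_le (S T : readingList) : Prop :=
  let n := rl_n S in let m := rl_n T in
  exists (k : nat -> nat) (f : nat -> nat -> nat),
    (forall i, i < n -> k i < m) /\
    (forall i j, i < j < n -> k i < k j) /\
    (forall i x, i < n -> x \in nth [::] (rl_sets S) i ->
        f i x \in nth [::] (rl_sets T) (k i)) /\
    (forall i x y, i < n -> x \in nth [::] (rl_sets S) i ->
        y \in nth [::] (rl_sets S) i -> x < y -> f i x < f i y) /\
    (forall i j x, i < n -> j < n ->
        x \in nth [::] (rl_sets S) i -> x \in nth [::] (rl_sets S) j ->
        f i x = f j x).

Definition rl_antichain (M : nat) (S : nat -> readingList) : Prop :=
  (forall i, valid_RL M (S i)) /\
  (forall i j, i <> j -> ~ rl_le (S i) (S j)).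

(* Main.v *)
Require Import Defs.
From Stdlib Require ClassicalEpsilon Classical.
From mathcomp Require Import all_boot.

Set Implicit Arguments. Unset Strict Implicit. Unset Printing Implicit Defensive.

Definition bad (T : eqType) (f : nat -> seq T) : Prop :=
  forall i j, i < j -> ~~ subseq (f i) (f j).

Definition ext (T : eqType) (p : seq (seq T)) : Prop :=
  exists h : nat -> seq T, bad h /\ forall i, i < size p -> h i = nth [::] p i.

Lemma min_exists (P : nat -> Prop) :
  (exists n, P n) -> exists n, P n /\ forall m, P m -> n <= m.
Proof.
move=> [n Pn]; apply: Classical_Prop.NNPP => Hno.
have H : forall k j, j <= k -> ~ P j.
  elim=> [|k IH] j Hj Pj.
    apply: Hno; exists j; split=> // m _.
    by move: Hj; rewrite leqn0 => /eqP->.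
  move: Hj; rewrite leq_eqVlt => /orP [/eqP Ej | Hj]; last by apply: (IH j).
  apply: Hno; exists j; split=> // m Pm; rewrite leqNgt; apply/negP => Hmj.
  by apply: (IH m) => //; rewrite -ltnS -Ej.
exact: (H n n (leqnn n)).
Qed.

Definition stepP (T : eqType) (p : seq (seq T)) (w : seq T) : Prop :=
  ext (rcons p w) /\ forall w', ext (rcons p w') -> size w <= size w'.

Definition step (T : eqType) (p : seq (seq T)) : seq T :=
  ClassicalEpsilon.epsilon (inhabits [::]) (stepP p).

Lemma step_spec (T : eqType) (p : seq (seq T)) : ext p -> stepP p (step p).
Proof.
move=> [h [hb hp]]; apply: ClassicalEpsilon.epsilon_spec.
have ex : exists n, (fun n => exists w, size w = n /\ ext (rcons p w)) n.
  exists (size (h (size p))), (h (size p)); split => //.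
  exists h; split => // i; rewrite size_rcons ltnS leq_eqVlt => /orP [/eqP -> | lt].
    by rewrite nth_rcons ltnn eqxx.
  by rewrite nth_rcons lt hp.
have [n [[w [sw ew]] nmin]] := min_exists ex.
exists w; split => // w' ew'; rewrite sw; apply: nmin; by exists w'.
Qed.

Fixpoint pre (T : eqType) (k : nat) : seq (seq T) :=
  if k is k'.+1 then rcons (pre T k') (step (pre T k')) else [::].

Lemma size_pre (T : eqType) k : size (pre T k) = k.
Proof. by elim: k => //= k IH; rewrite size_rcons IH. Qed.

Lemma nth_pre (T : eqType) k i : i < k -> nth [::] (pre T k) i = step (pre T i).
Proof.
elim: k => // k IH; rewrite ltnS leq_eqVlt => /orP [/eqP -> | lt] /=.
  by rewrite nth_rcons size_pre ltnn eqxx.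
by rewrite nth_rcons size_pre lt IH.
Qed.

Lemma ext_pre (T : eqType) : ext (pre T 0) -> forall k, ext (pre T k).
Proof. by move=> e0; elim=> // k IH /=; have [] := step_spec IH. Qed.

Lemma pigeon (T : finType) (c : nat -> T) :
  exists a, forall N, exists k, N <= k /\ c k = a.
Proof.
apply: Classical_Prop.NNPP => Hn.
have H1 : forall a, exists N, forall k, N <= k -> c k != a.
  move=> a; apply: Classical_Prop.NNPP => H2; apply: Hn; exists a => N.
  apply: Classical_Prop.NNPP => H3; apply: H2; exists N => k Nk.
  apply/negP => /eqP E; apply: H3; by exists k.
have H2 : forall L : seq T, exists N, forall k, N <= k -> forall a, a \in L -> c k != a.
  elim=> [|a L [N HN]]; first by exists 0.
  have [N' HN'] := H1 a.
  exists (maxn N N') => k Nk b; rewrite inE => /orP [/eqP -> | bL].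
    by apply: HN'; apply: leq_trans Nk; apply: leq_maxr.
  by apply: HN => //; apply: leq_trans Nk; apply: leq_maxl.
have [N HN] := H2 (enum T).
by move: (HN N (leqnn N) (c N)); rewrite mem_enum eqxx => /(_ isT).
Qed.

Fixpoint phi (nx : nat -> nat) (j : nat) : nat :=
  if j is j'.+1 then nx (phi nx j').+1 else nx 0.

Lemma higman (T : finType) (f : nat -> seq T) :
  exists i j, i < j /\ subseq (f i) (f j).
Proof.
apply: Classical_Prop.NNPP => Hn.
have fb : bad f by move=> i j ij; apply/negP => s; apply: Hn; exists i, j.
have e0 : ext (pre T 0) by exists f.
have eP := ext_pre e0.
pose m k := step (pre T k).
have mbad : bad m.
  move=> i j ij; have [h [hb hp]] := eP j.+1.
  have hi : h i = m i by rewrite hp ?size_pre ?nth_pre // ltnS ltnW.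
  have hj : h j = m j by rewrite hp ?size_pre ?nth_pre.
  by rewrite -hi -hj hb.
have mmin : forall k w, ext (rcons (pre T k) w) -> size (m k) <= size w.
  by move=> k w; have [_ ] := step_spec (eP k); apply.
have mne : forall k, m k != [::].
  move=> k; apply/negP => /eqP mk; move: (mbad k k.+1 (ltnSn k)).
  by rewrite mk sub0seq.
case E0 : (m 0) => [|a0 w0]; first by move: (mne 0); rewrite E0.
pose c k := head a0 (m k).
pose u k := behead (m k).
have mE : forall k, m k = c k :: u k.
  by move=> k; move: (mne k); rewrite /c /u; case: (m k).
have [a inf] := pigeon c.
have [nx nxP] : exists nx : nat -> nat, forall N, N <= nx N /\ c (nx N) = a.
  exists (fun N => proj1_sig (ClassicalEpsilon.constructive_indefinite_description _ (inf N))).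
  move=> N; exact: proj2_sig (ClassicalEpsilon.constructive_indefinite_description _ (inf N)).
have phia : forall j, c (phi nx j) = a by case=> [|j] /=; apply nxP.
have phiS : forall j, phi nx j < phi nx j.+1.
  by move=> j /=; have [] := nxP (phi nx j).+1.
have phim : forall p q, p < q -> phi nx p < phi nx q.
  by move=> p q; apply: (homo_ltn (r := fun x y => x < y)) => // y x z; apply: ltn_trans.
have phi0 : forall p, phi nx 0 <= phi nx p.
  by case=> // p; apply: ltnW; apply: phim.
pose s := phi nx 0.
pose h i := if i < s then m i else u (phi nx (i - s)).
have hb : bad h.
  move=> i j ij; rewrite /h.
  case: ltnP => hi; case: ltnP => hj.
  - exact: mbad.
  - apply/negP => sub; have := mbad i (phi nx (j - s)).
    rewrite (leq_trans hi (phi0 _)) => /(_ isT) /negP; apply.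
    by apply: (subseq_trans sub); rewrite mE; apply: subseq_cons.
  - by move: (leq_trans hj hi); rewrite ltnNge ltnW.
  - apply/negP => sub.
    have pq : i - s < j - s by rewrite ltn_sub2r // (leq_ltn_trans hi ij).
    have := mbad _ _ (phim _ _ pq); rewrite !mE !phia /= eqxx sub.
    by [].
have : ext (rcons (pre T s) (u s)).
  exists h; split => // i; rewrite size_rcons size_pre ltnS leq_eqVlt.
  move=> /orP [/eqP -> | lt].
    by rewrite nth_rcons size_pre ltnn eqxx /h ltnn subnn.
  by rewrite nth_rcons size_pre lt nth_pre // /h lt.
by move/mmin; rewrite mE /= ltnn.
Qed.

Lemma subseq_idx (T : eqType) (x0 : T) (w v : seq T) : subseq w v ->
  exists g : nat -> nat,
    (forall p, p < size w -> g p < size v /\ nth x0 w p = nth x0 v (g p)) /\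
    (forall p q, p < q -> q < size w -> g p < g q).
Proof.
elim: v w => [|b v IH] [|a w] //=.
- by move=> _; exists id.
- by move=> _; exists id.
- case: eqP => [<-|_] sub.
  + have [g [g1 g2]] := IH w sub.
    exists (fun p => if p is p'.+1 then (g p').+1 else 0); split.
      case=> [|p] //=; rewrite ltnS => pw; have [? ?] := g1 p pw; by split.
    case=> [|p] [|q] //=; rewrite !ltnS => pq qw; exact: g2.
  + have [g [g1 g2]] := IH (a::w) sub.
    exists (fun p => (g p).+1); split.
      move=> p pw; have [? ?] := g1 p pw; by split.
    move=> p q pq qw; rewrite ltnS; exact: g2.
Qed.

Lemma index_lt (s : seq nat) x y : sorted ltn s -> x \in s -> y \in s -> x < y ->
  index x s < index y s.
Proof.
move=> ss xs ys xy; rewrite ltnNge; apply/negP; rewrite leq_eqVlt => /orP [/eqP e | l].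
  by move: xy; rewrite -(nth_index 0 xs) -(nth_index 0 ys) e ltnn.
have := sorted_ltn_nth ltn_trans 0 ss; move=> /(_ (index y s) (index x s)).
rewrite !inE !index_mem => /(_ ys xs l); rewrite !nth_index // => yx.
by move: (ltn_trans xy yx); rewrite ltnn.
Qed.

Theorem mainTheorem5 (M : nat) :
  ~ (exists S : nat -> readingList,
        rl_antichain M S /\ exists B : nat, forall i, rl_n (S i) <= B).
Proof.
move=> [S [[_ anti] [B hB]]].
pose L := ('I_B.+1 + {ffun 'I_B -> bool})%type.
pose U i := sort leq (undup (flatten (rl_sets (S i)))).
pose lt i (x : nat) : {ffun 'I_B -> bool} := [ffun j : 'I_B => x \in nth [::] (rl_sets (S i)) j].
pose W i : seq L := inl (inord (rl_n (S i))) :: map (fun x => inr (lt i x)) (U i).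
have [i [j [ij sub]]] := higman W.
apply: (anti i j); first by move=> E; rewrite E ltnn in ij.
have sU : forall k, sorted ltn (U k).
  by move=> k; rewrite ltn_sorted_uniq_leq sort_uniq undup_uniq sort_sorted //; apply: leq_total.
have inU : forall k k0 x, x \in nth [::] (rl_sets (S k)) k0 -> x \in U k.
  move=> k k0 x xin; rewrite mem_sort mem_undup; apply/flattenP.
  exists (nth [::] (rl_sets (S k)) k0) => //; apply: mem_nth.
  by case: ltnP => // le; move: xin; rewrite nth_default.
move: sub; rewrite /W /=; case: eqP => [[E]|NE] sub; last first.
  have : (inl (inord (rl_n (S i))) : L) \in map (fun x => inr (lt j x) : L) (U j).
    by apply: (mem_subseq sub); apply: mem_head.
  by case/mapP.
have En : rl_n (S i) = rl_n (S j).
  by have := congr1 (@nat_of_ord _) E; rewrite !inordK ?ltnS.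
have [g [g1 g2]] := subseq_idx (inr (lt i 0) : L) sub.
exists id, (fun _ x => nth 0 (U j) (g (index x (U i)))).
split; first by move=> k; rewrite En.
split; first by move=> k l /andP[].
split.
  move=> k x kn xin /=.
  have xU := inU _ _ _ xin.
  have pw : index x (U i) < size (map (fun x => inr (lt i x)) (U i) : seq L) by rewrite size_map index_mem.
  have [gs ge] := g1 _ pw.
  move: gs ge; rewrite !size_map => gs.
  rewrite !(nth_map 0) // -?size_map ?index_mem // nth_index // => -[] ge.
  have kB : k < B by apply: leq_trans kn (hB i).
  have := congr1 (fun F : {ffun 'I_B -> bool} => F (Ordinal kB)) ge; rewrite !ffunE /= => <-.
  exact: xin.
split; last by [].
move=> k x y kn xin yin xy /=.
have xU := inU _ _ _ xin; have yU := inU _ _ _ yin.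
have pq := index_lt (sU i) xU yU xy.
have ys : index y (U i) < size (map (fun x => inr (lt i x)) (U i) : seq L) by rewrite size_map index_mem.
have gpq := g2 _ _ pq ys.
have [gs _] := g1 _ ys; move: gs; rewrite size_map => gs.
have := sorted_ltn_nth ltn_trans 0 (sU j); move=> /(_ (g (index x (U i))) (g (index y (U i)))).
rewrite !inE gs => /(_ (ltn_trans gpq gs) isT gpq); done.
Qed.
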